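(* Let $f$ be a Riemann-integrable function on $[0,1]$, let $L=\int_0^1f(x)\,dx$, and for $\varepsilon>0$ define \[D=\{x\in[0,1]: f(x)<0\},\qquad L_\varepsilon=\{x\in[0,1]: f(x)\in[0,L+\varepsilon]\}.\] Then at least one of the following holds: (i) $\left|\int_Df(x)\,dx\right|\ge\frac\varepsilon2$; (ii) $\mu(L_\varepsilon\cup D)\ge\frac{\varepsilon}{2(L+\varepsilon)}$, where $\mu$ denotes Lebesgue measure. *)

(* Defs.v *)
From Stdlib Require Import Reals.
From HB Require Import structures.
From mathcomp Require Import all_boot all_order all_algebra.
From mathcomp Require Import all_classical all_reals all_analysis.
From mathcomp Require Import Rstruct Rstruct_topology.
Set Implicit Arguments. Unset Strict Implicit. Unset Printing Implicit Defensive.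
Import Order.TTheory GRing.Theory Num.Theory.
Import numFieldNormedType.Exports.
Local Open Scope classical_set_scope.
Local Open Scope ring_scope.

Definition negset (f : R -> R) : set R :=
  [set x : R | x \in `[0%R, 1%R] /\ f x < 0].

Definition levelset (f : R -> R) (L eps : R) : set R :=
  [set x : R | x \in `[0%R, 1%R] /\ f x \in `[0%R, L + eps]].

(* Main.v *)
Require Import Defs.
From Stdlib Require Import Reals.
From HB Require Import structures.
From mathcomp Require Import all_boot all_order all_algebra.
From mathcomp Require Import all_classical all_reals all_analysis.
From mathcomp Require Import Rstruct Rstruct_topology.
Import Order.TTheory GRing.Theory Num.Theory.
Import numFieldNormedType.Exports.
Local Open Scope classical_set_scope.
Local Open Scope ring_scope.
From Stdlib Require Import Lra Lia RList RiemannInt_SF RiemannInt.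

Section Lists.
Local Open Scope R_scope.
Variable f : R -> R.

Fixpoint Pp (lf l : list R) : R := match lf, l with
 | c :: lf', x :: ((y :: _) as l') => Rmax c 0 * (y - x) + Pp lf' l'
 | _, _ => 0 end.
Fixpoint Nn (lf l : list R) : R := match lf, l with
 | c :: lf', x :: ((y :: _) as l') => Rmax (- c) 0 * (y - x) + Nn lf' l'
 | _, _ => 0 end.
Fixpoint Bb (K : R) (lf l : list R) : R := match lf, l with
 | c :: lf', x :: ((y :: _) as l') => (if Rlt_dec K c then y - x else 0) + Bb K lf' l'
 | _, _ => 0 end.
Fixpoint good (lf l : list R) : Prop := match lf, l with
 | nil, x :: nil => True
 | c :: lf', x :: ((y :: _) as l') =>
    x <= y /\ (forall t, x < t < y -> 0 <= t <= 1 /\ f t <= c) /\ good lf' l'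
 | _, _ => False end.

Lemma Int_SF_PN lf l : Int_SF lf l = Pp lf l - Nn lf l.
Proof.
elim: lf l => [|c lf IH] [|x [|y s]] //=; try lra.
rewrite IH /Rmax; destruct (Rle_dec c 0); destruct (Rle_dec (-c) 0); idtac. 
- have -> : c = 0 by lra. ring.
- ring.
- ring.
- exfalso; lra.
Qed.

Lemma Pp_Bb K lf l : 0 <= K -> good lf l -> K * Bb K lf l <= Pp lf l.
Proof.
move=> K0; elim: lf l => [|c lf IH] [|x [|y s]] //=; try lra.
move=> [xy [_ g]]; have := IH _ g.
have : 0 <= Rmax c 0 by apply Rmax_r.
have : c <= Rmax c 0 by apply Rmax_l.
move=> h1 h2 h3; destruct (Rlt_dec K c).
- have : 0 <= (Rmax c 0 - K) * (y - x) by apply Rmult_le_pos; lra.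
  simpl; nra.
- have : 0 <= Rmax c 0 * (y - x) by apply Rmult_le_pos; lra.
  simpl; nra.
Qed.

Lemma good_adapted lf l : ordered_Rlist l -> List.length l = S (List.length lf) ->
  (forall i, (i < Nat.pred (List.length l))%coq_nat -> forall t, pos_Rl l i < t < pos_Rl l (S i) ->
     0 <= t <= 1 /\ f t <= pos_Rl lf i) -> good lf l.
Proof.
elim: lf l => [|c lf IH] [|x [|y s]] //=.
move=> ord [len] H; split; [|split].
- by apply: (ord 0%nat); simpl; lia.
- by move=> t ht; apply: (H 0%nat) => //; simpl; lia.
- apply: IH.
  + exact: RList_P4 ord.
  + by simpl in *; rewrite len.
  + move=> i hi t ht; apply: (H (S i)) => //; simpl in *; lia.
Qed.

Fixpoint bigs (K : R) (lf l : list R) (t : R) : Prop := match lf, l with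
 | c :: lf', x :: ((y :: _) as l') => (K < c /\ x < t < y) \/ bigs K lf' l' t
 | _, _ => False end.

Definition ind (x y t : R) : R := if Rlt_dec x t then if Rlt_dec t y then 1 else 0 else 0.

Fixpoint hfun (lf l : list R) (t : R) : R := match lf, l with
 | c :: lf', x :: ((y :: _) as l') => Rmax (- c) 0 * ind x y t + hfun lf' l' t
 | _, _ => 0 end.

Lemma good_cover K lf l : good lf l -> forall t,
  pos_Rl l 0 <= t <= pos_Rl l (Nat.pred (List.length l)) ->
  K < f t -> List.In t l \/ bigs K lf l t.
Proof.
elim: lf l => [|c lf IH] [|x [|y s]] //=.
- by move=> _ t ht _; left; left; lra.
- move=> [xy [H g]] t ht Kt.
  destruct (Rle_lt_dec t x) as [h|h].
  { by left; left; lra. }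
  destruct (Rlt_le_dec t y) as [h'|h'].
  { right; left; have [? ?] := H t (conj h h'); split; lra. }
  have [//|[] ? | ?] := IH _ g t _ Kt.
  + simpl; split => //; lra.
  + by left; right; left.
  + by left; right; right.
  + by right; right.
Qed.

Lemma ind_ge0 x y t : 0 <= ind x y t.
Proof. rewrite /ind; destruct (Rlt_dec x t); destruct (Rlt_dec t y); simpl; lra. Qed.

Lemma hfun_ge0 lf l t : 0 <= hfun lf l t.
Proof.
elim: lf l => [|c lf IH] [|x [|y s]] //=; try lra.
have := IH (y :: s); have := ind_ge0 x y t; have := Rmax_r (-c) 0.
move=> *; nra.
Qed.

Lemma hfun_left lf y s t : good lf (y :: s) -> t <= y -> hfun lf (y :: s) t = 0.
Proof.
elim: lf y s => [|c lf IH] y [|z s] //=.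
move=> [yz [_ g]] ty; rewrite IH //; last lra.
rewrite /ind; destruct (Rlt_dec y t); first lra. simpl; ring.
Qed.

Lemma hfun_cases lf l t : good lf l -> hfun lf l t = 0 \/
  exists c, 0 <= t <= 1 /\ f t <= c /\ hfun lf l t = Rmax (- c) 0.
Proof.
elim: lf l => [|c lf IH] [|x [|y s]] //=; try by left.
move=> [xy [H g]]; rewrite /ind.
destruct (Rlt_dec x t) as [h|h]; [destruct (Rlt_dec t y) as [h'|h']|]; simpl.
- right; exists c; have [? ?] := H t (conj h h'); split => //; split => //.
  rewrite hfun_left //; [ring | lra].
- have [->|[c' [? [? ->]]]] := IH _ g; [left; ring | right; exists c'; split => //; split => //; ring].
- have [->|[c' [? [? ->]]]] := IH _ g; [left; ring | right; exists c'; split => //; split => //; ring].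
Qed.

End Lists.

Notation CT := ltac:(let t := type of (@completed_lebesgue_measure R) in
  match t with set ?T -> _ => exact T end) (only parsing).
Notation cmu := (@completed_lebesgue_measure R).

Lemma cmeas (A : set R) : @measurable _ (measurableTypeR R) A -> @measurable _ CT A.
Proof. move=> mA. apply: sub_caratheodory. exact: mA. Qed.

Lemma cmu_itv_oo (x y : R) : x <= y -> cmu `]x, y[%classic = (y - x)%:E.
Proof.
move=> xy; change (@lebesgue_measure R `]x, y[%classic = (y - x)%:E).
rewrite lebesgue_measure_itv /= lte_fin.
case: ltP => h; first by rewrite EFinB.
have -> : y = x by apply/eqP; rewrite eq_le xy h.
by rewrite subrr.
Qed.

Lemma cmu_itv_cc01 : cmu `[0%R, 1%R]%classic = 1%E.
Proof.
change (@lebesgue_measure R `[0%R, 1%R]%classic = 1%E).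
by rewrite lebesgue_measure_itv /= lte_fin ltr01 -EFinB subr0.
Qed.

Lemma cmu_set1 (a : R) : cmu [set a] = 0%E.
Proof. exact: (@lebesgue_measure_set1 R a). Qed.

Lemma ind_indic x y : ind x y = \1_(`]x, y[%classic) :> (R -> R).
Proof.
apply/funext => t; rewrite /ind indicE mem_setE in_itv /=.
destruct (Rlt_dec x t) as [h|h]; simpl.
  have -> : (x < t) = true by apply/RltP.
  destruct (Rlt_dec t y) as [h'|h']; simpl.
    by have -> : (t < y) = true by apply/RltP.
  by have -> : (t < y) = false by apply/negbTE/RltP.
by have -> : (x < t) = false by apply/negbTE/RltP.
Qed.

Lemma Rmax0_ge0 c : 0 <= Rmax (- c) 0.
Proof. by apply/RleP; apply: Rmax_r. Qed.

Lemma hfun_meas lf l : @measurable_fun _ _ CT (Real.sort R) setT (hfun lf l).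
Proof.
elim: lf l => [|c lf IH] l; first exact: measurable_cst.
case: l => [|x [|y s]] /=; [exact: measurable_cst | exact: measurable_cst | ].
have H1 : @measurable_fun _ _ CT (Real.sort R) setT (fun t => Rmax (- c) 0 * ind x y t).
  rewrite ind_indic.
  apply: measurable_realfun.measurable_funM; first exact: measurable_cst.
  by apply: measurable_realfun.measurable_indic; apply: cmeas; exact: measurable_itv.
have H := (@measurable_realfun.measurable_funD _ CT R setT _ _ H1 (IH (y :: s))).
exact: H.
Qed.

Lemma int_hfun f lf l : good f lf l ->
  (\int[cmu]_x (hfun lf l x)%:E = (Nn lf l)%:E)%E.
Proof.
elim: lf l => [|c lf IH] [|x [|y s]] //=; try by move=> _; rewrite integral0.
move=> [xy [_ g]].
under eq_integral do rewrite EFinD.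
rewrite ge0_integralD //; last 4 first.
- by move=> t _; rewrite lee_fin mulr_ge0 ?Rmax0_ge0 ?ind_ge0 //; apply/RleP; apply: ind_ge0.
- apply/measurable_realfun.measurable_EFinP; apply: measurable_realfun.measurable_funM; first exact: measurable_cst.
  by rewrite ind_indic; apply: measurable_realfun.measurable_indic; apply: cmeas; exact: measurable_itv.
- by move=> t _; rewrite lee_fin; apply/RleP; apply: hfun_ge0.
- by apply/measurable_realfun.measurable_EFinP; exact: hfun_meas.
rewrite IH // ind_indic.
rewrite (@integralZl_indic _ _ _ _ _ measurableT (fun _ => (`]x, y[%classic : set CT))) //; last first.
- by apply: cmeas; exact: measurable_itv.
- by move=> h; exfalso; move: (Rmax0_ge0 c); rewrite leNgt h.
rewrite integral_indic //; last by apply: cmeas; exact: measurable_itv.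
rewrite setIT.
move: (cmu_itv_oo x y ltac:(by apply/RleP)) => /= ->.
by rewrite -EFinM -EFinD.
Qed.

Lemma cmuU2 (A B : set R) : (cmu (A `|` B) <= cmu A + cmu B)%E.
Proof. exact: (@outer_measureU2 _ _ (@completed_lebesgue_measure R) A B). Qed.

Lemma cmu_le (A B : set R) : A `<=` B -> (cmu A <= cmu B)%E.
Proof. move=> AB. exact: (@le_outer_measure _ _ (@completed_lebesgue_measure R) A B AB). Qed.

Lemma bigs_meas K f lf l : good f lf l -> (cmu (bigs K lf l) <= (Bb K lf l)%:E)%E.
Proof.
elim: lf l => [|c lf IH] l.
  by move=> _; rewrite (_ : bigs K [::] l = set0) ?measure0 //.
case: l => [|x [|y s]]; [by [] | by [] | move=> [xy [_ g]]].
have -> : bigs K (c :: lf) (x :: y :: s) =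
   (if Rlt_dec K c then `]x, y[%classic else set0) `|` bigs K lf (y :: s).
  apply/seteqP; split => t /=.
    case=> [[Kc xty]|h]; last by right.
    left; destruct (Rlt_dec K c) => //=; rewrite in_itv /=; apply/andP; split; apply/RltP; tauto.
  case=> [|h]; last by right.
  destruct (Rlt_dec K c) => //= /[!in_itv] /andP[/RltP ? /RltP ?]; left; tauto.
apply: le_trans (cmuU2 _ _) _.
rewrite EFinD; apply: leeD; last exact: IH.
destruct (Rlt_dec K c) => /=; last by rewrite measure0.
by rewrite cmu_itv_oo //; apply/RleP.
Qed.

Lemma pts_meas l : cmu [set t | List.In t l] = 0%E.
Proof.
elim: l => [|x l IH].
  by rewrite (_ : [set t | List.In t [::]] = set0) ?measure0 //; apply/seteqP; split.
apply/eqP; rewrite eq_le measure_ge0 andbT.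
have -> : [set t | List.In t (x :: l)] = [set x] `|` [set t | List.In t l].
  by apply/seteqP; split => t /=; case => [->|h]; [left|right|left|right].
by apply: le_trans (cmuU2 _ _) _; rewrite cmu_set1 IH adde0.
Qed.

Lemma int_le_sup d (T : measurableType d) (mu : {measure set T -> \bar R}) (h g : T -> \bar R) :
  (forall x, (0 <= h x)%E) -> (forall x, (h x <= g x)%E) ->
  (\int[mu]_x h x <= \int[mu]_x g x)%E.
Proof.
move=> h0 hg.
have g0 : forall x, (0 <= g x)%E by move=> x; exact: le_trans (h0 x) (hg x).
rewrite (ge0_integralTE mu h0) (ge0_integralTE mu g0) /=.
apply: le_ereal_sup => _ [k kh <-]; exists k => //= x.
exact: le_trans (kh x) (hg x).
Qed.

Lemma negint f lf l : good f lf l ->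
  ((Nn lf l)%:E <= `| \int[cmu]_(x in negset f) (f x)%:E |)%E.
Proof.
move=> g.
rewrite integralE.
have -> : (\int[cmu]_(x in negset f) ((fun x => (f x)%:E)^\+ x) = 0)%E.
  apply: integral0_eq => x Dx; rewrite funeposE; apply/max_idPr.
  by rewrite lee_fin; apply/ltW; exact: Dx.2.
rewrite sub0e abseN gee0_abs; last first.
  by apply: integral_ge0 => x _; rewrite funenegE le_max lexx orbT.
rewrite integral_mkcond -(@int_hfun f lf l g).
apply: int_le_sup => t; first by rewrite lee_fin; apply/RleP; apply: hfun_ge0.
have ge0 : (0 <= ((fun x => (f x)%:E)^\- \_ (negset f)) t)%E.
  by rewrite patchE; case: ifP => // _; rewrite funenegE le_max lexx orbT.
have [->|[c [[t0 t1] [ftc ->]]]] := hfun_cases f lf l t g; first exact: ge0.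
have [c0|c0] := (leP 0 c).
  have -> : Rmax (- c) 0 = 0 by apply: Rmax_right; apply/RleP; rewrite oppr_le0.
  exact: ge0.
have ft0 : f t < 0 by apply: le_lt_trans c0; apply/RleP.
have Dt : t \in negset f.
  apply: mem_set; split => //; rewrite in_itv /=; apply/andP; split; apply/RleP => //.
rewrite patchE Dt funenegE le_max; apply/orP; left.
rewrite lee_fin Rmax_left; last by apply/RleP; rewrite oppr_ge0 ltW.
by rewrite lerN2; apply/RleP.
Qed.

Section St.
Local Open Scope R_scope.

Lemma approx_above f (pr : Riemann_integrable f 0 1) (eta : R) : 0 < eta ->
  exists u : StepFun 0 1, (forall t, 0 <= t <= 1 -> f t <= u t) /\
     RiemannInt_SF u < RiemannInt pr + eta.
Proof.
intros heta. unfold RiemannInt. destruct (RiemannInt_exists pr RinvN RinvN_cv) as [a Ha].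
assert (he2 : 0 < eta / 2) by lra.
destruct (Ha (eta/2) he2) as [N1 HN1].
destruct (RinvN_cv he2) as [N2 HN2].
set (n := Nat.max N1 N2).
destruct (phi_sequence_prop RinvN pr n) as [psi [Hpsi Hpsi2]].
exists (mkStepFun (StepFun_P28 1 (phi_sequence RinvN pr n) psi)).
split.
- intros t Ht. simpl. rewrite Rmin_left in Hpsi; [|lra]. rewrite Rmax_right in Hpsi; [|lra].
  specialize (Hpsi t Ht). have := Rle_abs (f t - phi_sequence RinvN pr n t). lra.
- rewrite StepFun_P30.
  have h1 := HN1 n ltac:(unfold n; lia). have h2 := HN2 n ltac:(unfold n; lia).
  unfold R_dist in h1, h2. rewrite Rminus_0_r in h2.
  have := Rle_abs (RiemannInt_SF (phi_sequence RinvN pr n) - a).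
  have := Rle_abs (RiemannInt_SF psi).
  have := Rle_abs (RinvN n).
  lra.
Qed.

Lemma endpoints (u : StepFun 0 1) :
  pos_Rl (subdivision u) 0 = 0 /\
  pos_Rl (subdivision u) (Nat.pred (List.length (subdivision u))) = 1.
Proof.
have [_ [h0 [h1 _]]] := StepFun_P1 u.
rewrite h0 h1 Rmin_left ?Rmax_right; lra.
Qed.

Lemma good_of_step f (u : StepFun 0 1) : (forall t, 0 <= t <= 1 -> f t <= u t) ->
  good f (subdivision_val u) (subdivision u).
Proof.
move=> fu.
have [ord [h0 [h1 [hlen hcst]]]] := StepFun_P1 u.
apply: good_adapted => // i hi t ht.
have [H6 _] := RList_P6 (subdivision u).
have a1 := H6 ord 0%nat i ltac:(lia) ltac:(lia).
have a2 := H6 ord (S i) (Nat.pred (List.length (subdivision u))) ltac:(lia) ltac:(lia).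
rewrite h0 Rmin_left in a1; [|lra]. rewrite h1 Rmax_right in a2; [|lra].
have t01 : 0 <= t <= 1 by lra.
split => //. rewrite -(hcst i hi t ht). exact: fu.
Qed.

Lemma RI_SF_eq (u : StepFun 0 1) :
  RiemannInt_SF u = Pp (subdivision_val u) (subdivision u) - Nn (subdivision_val u) (subdivision u).
Proof.
rewrite /RiemannInt_SF; destruct (Rle_dec 0 1); last lra.
exact: Int_SF_PN.
Qed.
End St.

From mathcomp Require Import lra.

Theorem lemma3p14 (f : R -> R) (pr : Riemann_integrable f 0%R 1%R)
  (eps : R) (heps : 0 < eps) :
  let L : R := RiemannInt pr in
  (`| \int[@completed_lebesgue_measure R]_(x in negset f) (f x)%:E | >=
     (eps / 2)%:E)%E
  \/
  (@completed_lebesgue_measure R (levelset f L eps `|` negset f) >=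
     (eps / (2 * (L + eps)))%:E)%E.
Proof.
move=> L.
have [K0|K0] := leP (L + eps) 0.
  right; apply: le_trans (measure_ge0 _ _).
  rewrite lee_fin; apply: mulr_ge0_le0; first exact: ltW.
  by rewrite invr_le0; apply: mulr_ge0_le0.
have [hm|hm] := leP ((eps / (2 * (L + eps)))%:E) (cmu (levelset f L eps `|` negset f)).
  by right.
left.
set A := levelset f L eps `|` negset f in hm *.
have m0 : (0 <= cmu A)%E := measure_ge0 _ _.
have mfin : cmu A \is a fin_num by rewrite ge0_fin_numE // (lt_trans hm) ?ltry.
set mr := fine (cmu A).
have mE : cmu A = mr%:E by rewrite /mr fineK.
rewrite mE lte_fin in hm.
have mr0 : 0 <= mr by rewrite -lee_fin -mE.
set eta := eps / 2 - (L + eps) * mr.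
have eta0 : 0 < eta.
  move: hm; rewrite ltr_pdivlMr; last by lra.
  rewrite /eta; lra.
have eta0' : (0 < eta)%coqR by apply/RltP.
have [u [uf uI]] := @approx_above f pr eta eta0'.
set l := subdivision u; set lf := subdivision_val u.
have g : good f lf l := @good_of_step f u uf.
have [e0 e1] := endpoints u.
have cover : `[0%R, 1%R]%classic `<=` A `|` bigs (L + eps) lf l `|` [set t | List.In t l].
  move=> t; rewrite /= in_itv /= => /andP[t0 t1].
  have [ftK|ftK] := leP (f t) (L + eps).
    left; left; have [fneg|fpos] := ltP (f t) 0.
      by right; split => //; rewrite in_itv /= t0 t1.
    by left; split; rewrite in_itv /= ?t0 ?t1 // fpos ftK.
  have ftK' : (L + eps < f t)%coqR by apply/RltP.
  have t0' : (0 <= t)%coqR by apply/RleP.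
  have t1' : (t <= 1)%coqR by apply/RleP.
  have := good_cover f (L + eps) lf l g t _ ftK'.
  rewrite -/l e0 e1 => /(_ (conj t0' t1')).
  by case => h; [right | left; right].
have one : 1 <= mr + Bb (L + eps) lf l.
  rewrite -lee_fin EFinD -mE -cmu_itv_cc01.
  apply: le_trans (cmu_le _ _ cover) _.
  apply: le_trans (cmuU2 _ _) _; rewrite pts_meas adde0.
  apply: le_trans (cmuU2 _ _) _.
  by apply: leeD => //; exact: bigs_meas g.
have K0' : (0 <= L + eps)%coqR by apply/RleP; exact: ltW.
have PB := Pp_Bb f (L + eps) lf l K0' g.
move/RleP: PB; rewrite RmultE RplusE => PB.
have RIe := RI_SF_eq u; rewrite RminusE -/l -/lf in RIe.
move/RltP: uI; rewrite RplusE -/L RIe => uI.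
have Ngt : eps / 2 < Nn lf l.
  move: one PB uI; rewrite /eta; nra.
apply: le_trans (@negint f lf l g); rewrite lee_fin; exact: ltW.
Qed.
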